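(* Let $(\mathcal{D}_i)$ be an infinite family of symmetric designs with parameters $(v_i,k_i,\lambda_i)$ and orders $q_i=k_i-\lambda_i\ge 2$, in which $v_i$ is bounded above by a linear function of $q_i$ (i.e. $v_i=O(q_i)$), and let $\Gamma_i$ be the incidence graph of $\mathcal{D}_i$, with $n_i=2v_i$ vertices. Then $\mu(\Gamma_i)=\Theta(\log n_i)$.
   Context: A symmetric design with parameters $(v,k,\lambda)$ is a pair $(X,\mathcal{B})$ where $X$ is a set of $v$ points and $\mathcal{B}$ is a family of $k$-subsets of $X$ (blocks) such that any two distinct points lie in exactly $\lambda$ blocks and any two distinct blocks meet in exactly $\lambda$ points. Its order is $q=k-\lambda$. Its incidence graph is the bipartite graph on $X\cup\mathcal{B}$ with $x$ adjacent to $B$ iff $x\in B$. A resolving set of a connected graph is a set $S$ of vertices such that for any two distinct vertices $u,w$ some $s\in S$ has $d(u,s)\neq d(w,s)$; the metric dimension $\mu(\Gamma)$ is the minimum size of a resolving set. *)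

(* Defs.v *)
From mathcomp Require Import all_boot.
From Stdlib Require Import Reals.
Set Implicit Arguments. Unset Strict Implicit. Unset Printing Implicit Defensive.

Definition symmetric_design (X : finType) (Bs : {set {set X}}) (k lam : nat) : Prop :=
  [/\ #|Bs| = #|X|,
      (forall B, B \in Bs -> #|B| = k),
      (forall x y : X, x != y -> #|[set B in Bs | (x \in B) && (y \in B)]| = lam)
    & (forall B B', B \in Bs -> B' \in Bs -> B != B' -> #|B :&: B'| = lam)].

Definition block_of (X : finType) (Bs : {set {set X}}) := {B : {set X} | B \in Bs}.
Definition inc_vertex (X : finType) (Bs : {set {set X}}) := (X + block_of Bs)%type.

Definition incidence_rel (X : finType) (Bs : {set {set X}}) : rel (inc_vertex Bs) :=
  fun u w => match u, w with
             | inl x, inr B => x \in val B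
             | inr B, inl x => x \in val B
             | _, _ => false
             end.

Arguments incidence_rel {X} Bs.

Fixpoint ball (T : finType) (e : rel T) (x : T) (r : nat) : {set T} :=
  match r with
  | 0 => [set x]
  | r'.+1 => ball e x r' :|: [set y | [exists z in ball e x r', e z y]]
  end.

(* d(x,y) = least r with y within distance r of x (equal to #|T| if unreachable,
   which never happens in a connected graph). *)
Definition dist (T : finType) (e : rel T) (x y : T) : nat :=
  find (fun r => y \in ball e x r) (iota 0 #|T|).

Definition resolving (T : finType) (e : rel T) (S : {set T}) : bool :=
  [forall u, forall w, (u != w) ==> [exists s in S, dist e u s != dist e w s]].

(* Metric dimension: minimum size of a resolving set (setT is always resolving). *)
Definition metric_dim (T : finType) (e : rel T) : nat :=
  #|[arg min_(S < [set: T] | resolving e S) #|S|]|.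

(* Main.v *)
Require Import Defs.
From mathcomp Require Import all_boot.
From Stdlib Require Import Reals.
From Stdlib Require Import Lra.
From mathcomp Require Import ssrnat zify.
Set Implicit Arguments. Unset Strict Implicit. Unset Printing Implicit Defensive.
Local Notation gdist := Defs.dist.
Local Notation gball := Defs.ball.


Section Dist.
Variables (T : finType) (e : rel T).

Lemma ball0 u : u \in ball e u 0.
Proof. by rewrite /= set11. Qed.

Lemma ball_mono u r : ball e u r \subset ball e u r.+1.
Proof. by rewrite /= subsetUl. Qed.

Lemma ball_monoW u r r' : r <= r' -> ball e u r \subset ball e u r'.
Proof.
elim: r' => [|r' IH]; first by rewrite leqn0 => /eqP ->.
rewrite leq_eqVlt => /orP [/eqP -> //|]; rewrite ltnS => /IH H.
exact: subset_trans H (ball_mono _ _).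
Qed.

Lemma ball_step u r z y : z \in ball e u r -> e z y -> y \in ball e u r.+1.
Proof.
move=> Hz Hzy /=; rewrite inE; apply/orP; right; rewrite inE.
by apply/existsP; exists z; rewrite Hz.
Qed.

Lemma dist_le u w r : w \in ball e u r -> gdist e u w <= r.
Proof.
move=> Hw; rewrite /gdist /Defs.dist.
case: (ltnP r #|T|) => Hr; last first.
  by apply: leq_trans (find_size _ _) _; rewrite size_iota.
rewrite leqNgt; apply/negP => /(before_find 0).
by rewrite nth_iota // add0n Hw.
Qed.

Lemma dist_ball u w : gdist e u w < #|T| -> w \in ball e u (gdist e u w).
Proof.
move=> H; have Hh : has (fun r => w \in ball e u r) (iota 0 #|T|).
  by rewrite has_find size_iota.
by have := nth_find 0 Hh; rewrite nth_iota ?add0n // -(size_iota 0 #|T|) -has_find.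
Qed.

Lemma distE u w r : r < #|T| -> w \in ball e u r ->
  (forall r', r' < r -> w \notin ball e u r') -> gdist e u w = r.
Proof.
move=> Hr Hw Hn; apply/eqP; rewrite eqn_leq dist_le //=.
rewrite leqNgt; apply/negP => Hlt.
have := Hn _ Hlt; rewrite dist_ball //; exact: ltn_trans Hlt Hr.
Qed.

Lemma dist0 u : gdist e u u = 0.
Proof.
apply: distE; last by [].
  by apply/card_gt0P; exists u.
exact: ball0.
Qed.

Lemma dist_neq0 u w : u != w -> gdist e u w != 0.
Proof.
move=> Huw; apply/negP => /eqP H.
have : gdist e u w < #|T| by rewrite H; apply/card_gt0P; exists u.
by move/dist_ball; rewrite H /= in_set1 eq_sym (negbTE Huw).
Qed.

Lemma two_le_card (u w : T) : u != w -> 1 < #|T|.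
Proof.
move=> Huw; rewrite (cardD1 u) (cardD1 w [predD1 T & u]) !inE eq_sym Huw //.
Qed.

Lemma dist1 u w : u != w -> (gdist e u w == 1) = e u w.
Proof.
move=> Huw; have H2 := two_le_card Huw.
apply/eqP/idP => [H|Hu].
  have := @dist_ball u w; rewrite H => /(_ H2) /=.
  rewrite !inE eq_sym (negbTE Huw) /= => /existsP [z]; rewrite !inE.
  by case/andP => /eqP ->.
apply: distE => //; first by apply: (@ball_step _ 0 u) => //; exact: ball0.
by case=> // _; rewrite /= in_set1 eq_sym Huw.
Qed.

Lemma dist_le_card u w : gdist e u w <= #|T|.
Proof. by apply: leq_trans (find_size _ _) _; rewrite size_iota. Qed.

Lemma resolvingT : resolving e [set: T].
Proof.
apply/forallP => u; apply/forallP => w; apply/implyP => Huw.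
apply/existsP; exists u; rewrite inE /= dist0 eq_sym.
by apply: dist_neq0; rewrite eq_sym.
Qed.

Lemma metric_dim_le S : resolving e S -> metric_dim e <= #|S|.
Proof.
move=> HS; rewrite /metric_dim.
by case: arg_minnP => [|M _ HM]; [exact: resolvingT | exact: HM].
Qed.

Lemma metric_dim_res : resolving e [arg min_(S < [set: T] | resolving e S) #|S|].
Proof. by case: arg_minnP => [|M HM _] //; exact: resolvingT. Qed.

End Dist.

Lemma card_sumI (T : finType) (A : {pred T}) : #|A| = \sum_x (x \in A : nat).
Proof.
rewrite -sum1_card big_mkcond /=; apply: eq_bigr => x _; by case: (x \in A).
Qed.

Lemma double_count (I J : finType) (R : I -> J -> bool) :
  \sum_i #|[set j | R i j]| = \sum_j #|[set i | R i j]|.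
Proof.
under eq_bigr => i _ do rewrite card_sumI.
rewrite exchange_big /=; apply: eq_bigr => j _; rewrite card_sumI.
by apply: eq_bigr => i _; rewrite !inE.
Qed.

Lemma hit (T U : finType) (G : U -> {set T}) m s : 0 < m ->
  (forall u, #|~: G u| <= s) -> #|U| * s ^ m < #|T| ^ m ->
  exists f : {ffun 'I_m -> T}, forall u, exists i, f i \in G u.
Proof.
move=> Hm Hs Hlt.
case: (boolP [exists f : {ffun 'I_m -> T}, [forall u, [exists i, f i \in G u]]]).
  by case/existsP => f /forallP Hf; exists f => u; have/existsP := Hf u.
move=> Hno; exfalso.
have Hle : forall f : {ffun 'I_m -> T}, 1 <= \sum_u (f \in ffun_on (~: G u) : nat).
  move=> f; move: Hno; rewrite negb_exists => /forallP /(_ f).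
  rewrite negb_forall => /existsP [u]; rewrite negb_exists => /forallP Hu.
  rewrite (bigD1 u) //=.
  have -> : f \in ffun_on (~: G u) by apply/ffun_onP => i; rewrite inE; exact: Hu i.
  by rewrite leq_addr.
have : \sum_(f : {ffun 'I_m -> T}) 1 <= \sum_(f : {ffun 'I_m -> T}) \sum_u (f \in ffun_on (~: G u) : nat).
  by apply: leq_sum => f _; exact: Hle.
rewrite exchange_big /=.
under [X in _ <= X -> _]eq_bigr => u _ do rewrite -card_sumI card_ffun_on card_ord.
move=> H1.
have H2 : \sum_u #|~: G u| ^ m <= \sum_(u : U) s ^ m.
  by apply: leq_sum => u _; rewrite leq_exp2r.
have := leq_trans H1 H2.
rewrite sum1_card card_ffun card_ord sum_nat_const => H3.
by have := leq_ltn_trans H3 Hlt; rewrite ltnn.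
Qed.

Lemma bern n k : n ^ k.+1 + k.+1 * n ^ k <= n.+1 ^ k.+1.
Proof.
elim: k => [|k IH]; first by rewrite !expn1 expn0; lia.
rewrite (expnS n k.+1) (expnS n.+1 k.+1) (expnS n k).
rewrite expnS in IH.
set a := n ^ k in IH *; set b := n.+1 ^ k.+1 in IH *.
nia.
Qed.

Lemma two_pow A : 0 < A -> 2 * (A.-1) ^ A <= A ^ A.
Proof.
case: A => // a _ /=.
have := bern a a; rewrite expnS.
set c := a ^ a; nia.
Qed.

Lemma arith v q A : 0 < v -> 0 < A -> v <= A * q ->
  v * v * (v - 2 * q) ^ (A * (2 * (trunc_log 2 v).+1))
    < v ^ (A * (2 * (trunc_log 2 v).+1)).
Proof.
move=> Hv HA Hvq.
set j := 2 * (trunc_log 2 v).+1; set m := A * j.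
have Hj : 0 < j by rewrite /j.
have Hvj : v * v < 2 ^ j.
  have H := trunc_log_ltn v (isT : 1 < 2).
  rewrite /j mulnC expnM expnS expn1.
  by rewrite ltn_mul.
have Hpow : 2 ^ j * (A.-1) ^ m <= A ^ m.
  have : (2 * A.-1 ^ A) ^ j <= (A ^ A) ^ j by rewrite leq_exp2r // two_pow.
  by rewrite expnMn -!expnM.
have H1 : v * v * (A.-1) ^ m < A ^ m.
  case: (posnP ((A.-1) ^ m)) => [->|Hp]; first by rewrite muln0 expn_gt0 HA.
  apply: leq_trans Hpow; by rewrite ltn_pmul2r.
have H2 : (v - 2 * q) * A <= A.-1 * v.
  case: A HA Hvq {Hpow H1 m} => // a _ Hvq /=; nia.
have HAm : 0 < A ^ m by rewrite expn_gt0 HA.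
rewrite -(ltn_pmul2r HAm) -mulnA -expnMn.
apply: (@leq_ltn_trans (v * v * (A.-1 * v) ^ m)).
  by rewrite leq_mul2l leq_exp2r ?H2 ?orbT // /m muln_gt0 HA.
by rewrite expnMn mulnA [X in _ < X]mulnC ltn_pmul2r // expn_gt0 Hv.
Qed.

Section Design.
Variables (X : finType) (Bs : {set {set X}}) (k lam : nat).
Hypothesis Hdes : symmetric_design Bs k lam.
Hypothesis Hq : 2 <= k - lam.

Definition rdeg x := #|[set B in Bs | x \in B]|.

Lemma E1 x : rdeg x * k = rdeg x + (#|X|).-1 * lam.
Proof.
case: Hdes => _ Hk Hxy _.
have L : \sum_B #|[set y | [&& B \in Bs, x \in B & y \in B]]| = rdeg x * k.
  rewrite /rdeg -sum_nat_const [RHS]big_mkcond /=.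
  apply: eq_bigr => B _; rewrite inE; case: (boolP (B \in Bs)) => HB /=;
    case: (boolP (x \in B)) => Hx /=.
  - by rewrite -(Hk B HB); apply: eq_card => y; rewrite !inE.
  - by apply: eq_card0 => y; rewrite !inE ?andbF.
  - by apply: eq_card0 => y; rewrite !inE ?andbF.
  - by apply: eq_card0 => y; rewrite !inE ?andbF.
have R : \sum_y #|[set B | [&& B \in Bs, x \in B & y \in B]]| = rdeg x + (#|X|).-1 * lam.
  rewrite (bigD1 x) //=; congr (_ + _).
    by rewrite /rdeg; apply: eq_card => B; rewrite !inE andbb.
  rewrite -(cardC1 x) -sum_nat_const; apply: eq_big => y; first by rewrite !inE.
  by move=> Hy; apply: Hxy; rewrite eq_sym.
by rewrite -L -R double_count.
Qed.

Lemma E2 B0 : B0 \in Bs -> \sum_(x in B0) rdeg x = k + (#|X|).-1 * lam.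
Proof.
move=> HB0; case: Hdes => HBs Hk _ Hbb.
have L : \sum_x #|[set B | [&& x \in B0, B \in Bs & x \in B]]| = \sum_(x in B0) rdeg x.
  rewrite [RHS]big_mkcond /=; apply: eq_bigr => x _.
  case: (boolP (x \in B0)) => Hx /=.
    by rewrite /rdeg; apply: eq_card => B; rewrite !inE.
  by apply: eq_card0 => y; rewrite !inE ?andbF.
have R : \sum_B #|[set x | [&& x \in B0, B \in Bs & x \in B]]| = k + (#|X|).-1 * lam.
  rewrite (bigD1 B0) //=; congr (_ + _).
    rewrite -(Hk B0 HB0); apply: eq_card => y; rewrite !inE HB0.
    by case: (y \in B0).
  rewrite -HBs (cardsD1 B0 Bs) HB0 add1n /= -sum_nat_const.
  rewrite big_mkcond [RHS]big_mkcond /=; apply: eq_bigr => B _.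
  rewrite !inE; case: (boolP (B == B0)) => HBB //=.
  case: (boolP (B \in Bs)) => HB /=.
    rewrite -(Hbb B0 B HB0 HB); last by rewrite eq_sym.
    by apply: eq_card => y; rewrite !inE.
  by apply: eq_card0 => y; rewrite !inE ?andbF.
by rewrite -L -R double_count.
Qed.

Lemma k_ge2 : 2 <= k.
Proof. by apply: leq_trans Hq (leq_subr _ _). Qed.

Lemma rdeg_k (Hv : 0 < #|X|) x : rdeg x = k.
Proof.
have Hk2 := k_ge2.
have Hall : forall y, rdeg y = rdeg x.
  move=> y; have := E1 y; have := E1 x.
  case: k Hk2 => // k' Hk'; rewrite !mulnS.
  move=> H1 H2; have H3 : rdeg y * k' = rdeg x * k' by lia.
  by apply/eqP; rewrite -(eqn_pmul2r (_ : 0 < k')) ?H3.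
case: Hdes => HBs Hk _ _.
have : Bs != set0 by rewrite -card_gt0 HBs.
case/set0Pn => B0 HB0.
have := E2 HB0; rewrite (eq_bigr (fun=> rdeg x)) ?sum_nat_const => [|y _]; last exact: Hall.
rewrite (Hk B0 HB0); have := E1 x; nia.
Qed.

Lemma lam_pos (Hv : 0 < #|X|) : 0 < lam.
Proof.
have Hk2 := k_ge2; have [x _] := card_gt0P Hv.
have := E1 x; rewrite rdeg_k //.
case: lam => // H; exfalso; nia.
Qed.

End Design.

Lemma card_in_sum (T : finType) (D : {set T}) (R : pred T) :
  #|[set z in D | R z]| = \sum_(z in D) (R z : nat).
Proof.
rewrite card_sumI [RHS]big_mkcond; apply: eq_bigr => z _; rewrite inE.
by case: (z \in D).
Qed.

Lemma card_sep (T : finType) (D : {set T}) (P Q : pred T) :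
  #|[set z in D | P z == Q z]| + #|[set z in D | P z]| + #|[set z in D | Q z]|
  = #|D| + 2 * #|[set z in D | P z && Q z]|.
Proof.
rewrite !card_in_sum -!big_split /= -sum1_card big_distrr /= -big_split.
by apply: eq_bigr => z _; case: (P z); case: (Q z).
Qed.

Section Graph.
Variables (X : finType) (Bs : {set {set X}}) (k lam : nat).
Hypothesis Hdes : symmetric_design Bs k lam.
Hypothesis Hq : 2 <= k - lam.
Hypothesis Hv : 0 < #|X|.

Local Notation T := (inc_vertex Bs).
Local Notation e := (incidence_rel Bs).


Lemma sep_points x y : x != y ->
  #|[set B in Bs | (x \in B) == (y \in B)]| + 2 * k = #|X| + 2 * lam.
Proof.
move=> Hxy; case: (Hdes) => HBs _ Hl _.
have := card_sep Bs (fun B => x \in B) (fun B => y \in B).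
have := rdeg_k Hdes Hq Hv x; have := rdeg_k Hdes Hq Hv y; rewrite /rdeg.
rewrite (Hl x y Hxy) HBs => -> ->; lia.
Qed.

Lemma sep_blocks B B' : B \in Bs -> B' \in Bs -> B != B' ->
  #|[set z | (z \in B) == (z \in B')]| + 2 * k = #|X| + 2 * lam.
Proof.
move=> HB HB' HBB; case: (Hdes) => _ Hk _ Hbb.
have := card_sep [set: X] (fun z => z \in B) (fun z => z \in B').
have E : forall R : pred X, #|[set z in [set: X] | R z]| = #|[set z | R z]|.
  by move=> R; apply: eq_card => z; rewrite !inE.
rewrite !E cardsT.
have -> : #|[set z | z \in B]| = k by rewrite -(Hk B HB); apply: eq_card => z; rewrite !inE.
have -> : #|[set z | z \in B']| = k by rewrite -(Hk B' HB'); apply: eq_card => z; rewrite !inE.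
have -> : #|[set z | (z \in B) && (z \in B')]| = lam.
  by rewrite -(Hbb B B' HB HB' HBB); apply: eq_card => z; rewrite !inE.
lia.
Qed.

Lemma sep_points_le x y : x != y ->
  #|[set B in Bs | (x \in B) == (y \in B)]| <= #|X| - 2 * (k - lam).
Proof. by move/sep_points; lia. Qed.

Lemma sep_blocks_le B B' : B \in Bs -> B' \in Bs -> B != B' ->
  #|[set z | (z \in B) == (z \in B')]| <= #|X| - 2 * (k - lam).
Proof. by move=> H1 H2 H3; have := sep_blocks H1 H2 H3; lia. Qed.

Lemma card_blk (P : pred {set X}) :
  #|[set B : block_of Bs | P (val B)]| = #|[set B in Bs | P B]|.
Proof.
rewrite -(card_imset _ val_inj); apply: eq_card => B; rewrite inE.
apply/imsetP/andP => [[B' HB' ->]|[HB HP]].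
  by split; [exact: valP | rewrite inE in HB'].
by exists (exist _ B HB); rewrite // inE.
Qed.

Lemma card_block_of : #|{: block_of Bs}| = #|X|.
Proof.
case: Hdes => HBs _ _ _; rewrite -HBs card_sig; apply: eq_card => B; by rewrite !inE.
Qed.

Lemma card_T : #|{: T}| = 2 * #|X|.
Proof. by rewrite card_sum card_block_of; lia. Qed.

Lemma common_block x y : exists C : block_of Bs, (x \in val C) && (y \in val C).
Proof.
have Hl := lam_pos Hdes Hq Hv.
have Hk2 := k_ge2 Hq.
case: (Hdes) => _ _ Hxy _.
have : [set B in Bs | (x \in B) && (y \in B)] != set0.
  case: (eqVneq x y) => [<-|Hne].
    rewrite -card_gt0; have := rdeg_k Hdes Hq Hv x; rewrite /rdeg => Hr.
    rewrite (eq_card (B := [set B in Bs | x \in B])) ?Hr; first by lia.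
    by move=> B; rewrite !inE andbb.
  by rewrite -card_gt0 Hxy.
case/set0Pn => B; rewrite !inE => /andP [HB HxyB].
by exists (exist _ B HB).
Qed.

Lemma common_point (B B' : block_of Bs) : exists z, (z \in val B) && (z \in val B').
Proof.
have Hl := lam_pos Hdes Hq Hv.
have Hk2 := k_ge2 Hq.
case: (Hdes) => _ Hk _ Hbb.
have : val B :&: val B' != set0.
  case: (eqVneq B B') => [<-|Hne].
    by rewrite setIid -card_gt0 (Hk _ (valP B)); lia.
  rewrite -card_gt0 Hbb ?(valP B) ?(valP B') //.
by case/set0Pn => z; rewrite inE => Hz; exists z.
Qed.

Lemma block_nonempty (B : block_of Bs) : exists z, z \in val B.
Proof. by have [z /andP [Hz _]] := common_point B B; exists z. Qed.

Lemma path2 (u a w : T) : e u a -> e a w -> w \in gball e u 2.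
Proof. by move=> H1 H2; apply: (ball_step (ball_step (ball0 _ _) H1) H2). Qed.

Lemma path3 (u a b w : T) : e u a -> e a b -> e b w -> w \in gball e u 3.
Proof.
by move=> H1 H2 H3; apply: (ball_step (ball_step (ball_step (ball0 _ _) H1) H2) H3).
Qed.

Lemma dist_le3 (u w : T) : gdist e u w <= 3.
Proof.
apply: dist_le.
case: u => [x|B]; case: w => [y|B'].
- have [C /andP [H1 H2]] := common_block x y.
  apply: (subsetP (ball_monoW _ _ (isT : 2 <= 3))).
  by apply: (@path2 _ (inr C)).
- have [z Hz] := block_nonempty B'.
  have [C /andP [H1 H2]] := common_block x z.
  by apply: (@path3 _ (inr C) (inl z)).
- have [z Hz] := block_nonempty B.
  have [C /andP [H1 H2]] := common_block z y.
  by apply: (@path3 _ (inl z) (inr C)).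
- have [z /andP [H1 H2]] := common_point B B'.
  apply: (subsetP (ball_monoW _ _ (isT : 2 <= 3))).
  by apply: (@path2 _ (inl z)).
Qed.

Lemma dist_inl_inr x (B : block_of Bs) : (gdist e (inl x) (inr B) == 1) = (x \in val B).
Proof. by rewrite dist1. Qed.

Lemma dist_inr_inl (B : block_of Bs) x : (gdist e (inr B) (inl x) == 1) = (x \in val B).
Proof. by rewrite dist1. Qed.

Lemma ball1_inl x p : inl p \in gball e (inl x) 1 -> p = x.
Proof.
rewrite /= !inE => /orP [/eqP [] //|/existsP [z]].
by rewrite inE => /andP [/eqP ->].
Qed.

Lemma ball2_inr (B : block_of Bs) p : inl p \in gball e (inr B) 2 -> p \in val B.
Proof.
rewrite /= !inE => /orP [/orP [//|/existsP [z]]|/existsP [z]].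
  by rewrite inE => /andP [/eqP ->].
rewrite !inE => /andP [/orP [/eqP ->//|/existsP [z']]].
rewrite inE => /andP [/eqP ->]; by case: z.
Qed.

Lemma dist_pp x p : x != p -> gdist e (inl x) (inl p) = 2.
Proof.
move=> Hxp; have HX : 1 < #|X| := two_le_card Hxp.
apply: distE.
- by rewrite card_T; lia.
- have [C /andP [H1 H2]] := common_block x p.
  by apply: (@path2 _ (inr C)).
- case=> [|[|//]] _.
    by rewrite /= inE; apply: contra Hxp => /eqP [->].
  by apply/negP => /ball1_inl Hpx; move: Hxp; rewrite Hpx eqxx.
Qed.

Lemma dist_bp_ne2 (B : block_of Bs) p (x : X) : x != p -> gdist e (inr B) (inl p) != 2.
Proof.
move=> Hxp; have HX : 1 < #|X| := two_le_card Hxp.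
apply/negP => /eqP H.
have : gdist e (inr B) (inl p) < #|{: T}| by rewrite H card_T; lia.
move/dist_ball; rewrite H => /ball2_inr HpB.
by move: (dist_inr_inl B p); rewrite H HpB.
Qed.

Lemma lower_bound : 2 * #|X| <= 4 ^ metric_dim e.
Proof.
set S := [arg min_(S < [set: T] | resolving e S) #|S|].
have HS : resolving e S := metric_dim_res e.
rewrite /metric_dim -/S -card_T.
have -> : 4 ^ #|S| = #|{: {ffun 'I_#|S| -> 'I_4}}| by rewrite card_ffun !card_ord.
pose f (u : T) : {ffun 'I_#|S| -> 'I_4} := [ffun j => inord (gdist e u (enum_val j))].
apply: (@leq_card _ _ f) => u w Hf.
apply/eqP; apply: contraT => Huw.
move/forallP: HS => /(_ u) /forallP /(_ w); rewrite Huw /= => /existsP [s /andP [Hs Hd]].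
move/ffunP: Hf => /(_ (enum_rank_in Hs s)).
rewrite /f !ffunE enum_rankK_in // => /(congr1 (@nat_of_ord 4)).
rewrite !inordK ?ltnS ?dist_le3 // => Heq.
by move: Hd; rewrite Heq eqxx.
Qed.

Lemma upper A : 0 < A -> #|X| <= A * (k - lam) ->
  metric_dim e <= 4 * A * (trunc_log 2 #|X|).+1.
Proof.
move=> HA Hvq.
set m := A * (2 * (trunc_log 2 #|X|).+1).
have Hm : 0 < m by rewrite /m muln_gt0 HA.
have Har := arith Hv HA Hvq.
have Hk2 := k_ge2 Hq.
pose Gb (p : X * X) : {set block_of Bs} := if p.1 == p.2 then setT
  else [set B : block_of Bs | (p.1 \in val B) != (p.2 \in val B)].
have [fb Hfb] : exists fb : {ffun 'I_m -> block_of Bs}, forall p, exists i, fb i \in Gb p.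
  apply: (hit (s := #|X| - 2 * (k - lam))) => //.
  - case=> x y; rewrite /Gb /=; case: (eqVneq x y) => [_|Hxy]; first by rewrite setCT cards0.
    rewrite (eq_card (B := [set B : block_of Bs | (x \in val B) == (y \in val B)])); last first.
      by move=> B; rewrite !inE negbK.
    rewrite (card_blk (fun C => (x \in C) == (y \in C))); exact: sep_points_le.
  - by rewrite card_prod card_block_of.
pose Gp (p : block_of Bs * block_of Bs) : {set X} := if p.1 == p.2 then setT
  else [set z | (z \in val p.1) != (z \in val p.2)].
have [fp Hfp] : exists fp : {ffun 'I_m -> X}, forall p, exists i, fp i \in Gp p.
  apply: (hit (s := #|X| - 2 * (k - lam))) => //.
  - case=> B B'; rewrite /Gp /=; case: (eqVneq B B') => [_|HBB]; first by rewrite setCT cards0.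
    rewrite (eq_card (B := [set z | (z \in val B) == (z \in val B')])); last first.
      by move=> z; rewrite !inE negbK.
    have HBB' : val B != val B' by apply: contra HBB => /eqP /val_inj ->.
    exact: sep_blocks_le (valP B) (valP B') HBB'.
  - by rewrite card_prod card_block_of.
pose i0 : 'I_m := Ordinal Hm.
pose S : {set T} := [set (inl (fp i) : T) | i : 'I_m] :|: [set (inr (fb i) : T) | i : 'I_m].
apply: (@leq_trans #|S|); last first.
  rewrite cardsU; apply: leq_trans (leq_subr _ _) _.
  apply: leq_trans (leq_add (leq_imset_card _ _) (leq_imset_card _ _)) _.
  rewrite card_ord /m; nia.
apply: metric_dim_le.
apply/forallP => u; apply/forallP => w; apply/implyP => Huw; apply/existsP.
have HpS : forall i, (inl (fp i) : T) \in S.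
  by move=> i; rewrite inE; apply/orP; left; apply/imsetP; exists i.
have HbS : forall i, (inr (fb i) : T) \in S.
  by move=> i; rewrite inE; apply/orP; right; apply/imsetP; exists i.
case: u Huw => [x|B]; case: w => [y|B'] Huw.
- have Hxy : x != y by apply: contra Huw => /eqP ->.
  have [i Hi] := Hfb (x, y); move: Hi; rewrite /Gb /= (negbTE Hxy) inE => Hi.
  exists (inr (fb i)); rewrite HbS /=.
  by apply: contra Hi => /eqP Hd; rewrite -!dist_inl_inr Hd.
- exists (inl (fp i0)); rewrite HpS /=.
  case: (eqVneq x (fp i0)) => [<-|Hx].
    by rewrite dist0 eq_sym; apply: dist_neq0.
  by rewrite (dist_pp Hx) eq_sym; apply: (dist_bp_ne2 _ Hx).
- exists (inl (fp i0)); rewrite HpS /=.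
  case: (eqVneq y (fp i0)) => [<-|Hy].
    by rewrite dist0; apply: dist_neq0.
  by rewrite (dist_pp Hy); apply: (dist_bp_ne2 _ Hy).
- have HBB : B != B' by apply: contra Huw => /eqP ->.
  have [i Hi] := Hfp (B, B'); move: Hi; rewrite /Gp /= (negbTE HBB) inE => Hi.
  exists (inl (fp i)); rewrite HpS /=.
  by apply: contra Hi => /eqP Hd; rewrite -!dist_inr_inl Hd.
Qed.

End Graph.

Lemma expn_pow m n : expn m n = Nat.pow m n.
Proof. by elim: n => [|n IH] //; rewrite expnS IH. Qed.

Lemma INR_muln a b : INR (a * b) = (INR a * INR b)%R.
Proof. exact: mult_INR. Qed.

Lemma ln_le' x y : (0 < x)%R -> (x <= y)%R -> (ln x <= ln y)%R.
Proof.
move=> Hx Hxy; case: (Rle_lt_or_eq_dec _ _ Hxy) => [H|->]; last by apply: Rle_refl.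
by apply: Rlt_le; apply: ln_increasing.
Qed.

Lemma ln0 : ln 0 = 0%R.
Proof. by rewrite /ln; case: (Rlt_dec 0 0) => // H; exfalso; lra. Qed.

Lemma ln2_pos : (0 < ln 2)%R.
Proof. have := ln_lt_2; lra. Qed.

Lemma ln4_pos : (0 < ln 4)%R.
Proof. rewrite -ln_1; apply: ln_increasing; lra. Qed.

Lemma metric_dim_card (T : finType) (e : rel T) : metric_dim e <= #|T|.
Proof. exact: max_card. Qed.

Lemma per_design (X : finType) (Bs : {set {set X}}) (k lam : nat)
  (Hdes : symmetric_design Bs k lam) (Hq : 2 <= k - lam) (A : nat) :
  0 < A -> #|X| <= A * (k - lam) ->
  (/ ln 4 * ln (INR (2 * #|X|)) <= INR (metric_dim (incidence_rel Bs)))%R /\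
  (INR (metric_dim (incidence_rel Bs)) <= 4 * INR A / ln 2 * ln (INR (2 * #|X|)))%R.
Proof.
move=> HA Hvq.
have L2 := ln2_pos; have L4 := ln4_pos.
case: (posnP #|X|) => [Hv0|Hv].
  have Hm : metric_dim (incidence_rel Bs) = 0.
    apply/eqP; rewrite -leqn0; apply: leq_trans (metric_dim_card _) _.
    by rewrite card_sum (card_block_of Hdes) Hv0.
  rewrite Hm Hv0 muln0 /= ln0; lra.
set mu := metric_dim (incidence_rel Bs).
have Hv2 : (0 < INR (2 * #|X|))%R by apply: lt_0_INR; apply/ltP; rewrite muln_gt0.
split.
  have H := lower_bound Hdes Hq Hv.
  have H' : (INR (2 * #|X|) <= 4 ^ mu)%R.
    have -> : (4 ^ mu)%R = INR (expn 4 mu).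
      by rewrite expn_pow pow_INR (_ : INR 4 = 4%R) //=; lra.
    by apply: le_INR; apply/leP.
  have := ln_le' Hv2 H'; rewrite ln_pow; last lra.
  move=> Hl; apply: (Rmult_le_reg_l (ln 4)) => //.
  rewrite -Rmult_assoc Rinv_r; lra.
have H := upper Hdes Hq Hv HA Hvq.
set t := trunc_log 2 #|X| in H.
have Ht : (INR t * ln 2 <= ln (INR #|X|))%R.
  rewrite -ln_pow; last lra.
  apply: ln_le'; first by apply: pow_lt; lra.
  have -> : (2 ^ t)%R = INR (expn 2 t).
    by rewrite expn_pow pow_INR (_ : INR 2 = 2%R) //=; lra.
  by apply: le_INR; apply/leP; apply: trunc_logP.
have Hmu : (INR mu <= 4 * INR A * (INR t + 1))%R.
  have := le_INR _ _ (leP H); rewrite !INR_muln -S_INR.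
  by rewrite (_ : INR 4 = 4%R) //= ; lra.
rewrite INR_muln ln_mult; first last.
- by apply: lt_0_INR; apply/ltP.
- simpl; lra.
have Ht' : (INR t <= ln (INR #|X|) / ln 2)%R.
  apply: (Rmult_le_reg_r (ln 2)) => //.
  rewrite /Rdiv Rmult_assoc Rinv_l; lra.
have HA0 : (0 <= INR A)%R by apply: pos_INR.
have -> : (4 * INR A / ln 2 * (ln (INR 2) + ln (INR #|X|)))%R
        = (4 * INR A + 4 * INR A * (ln (INR #|X|) / ln 2))%R.
  rewrite (_ : INR 2 = 2%R) //; field; lra.
nra.
Qed.

Unset Implicit Arguments.
Set Strict Implicit.

Theorem corollary2p8
  (X : nat -> finType) (Bs : forall i, {set {set X i}}) (k lam : nat -> nat)
  (Hdes : forall i, symmetric_design (Bs i) (k i) (lam i))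
  (Hq : forall i, 2 <= k i - lam i)
  (Hlin : exists a b : R, forall i,
      (INR #|X i| <= a * INR (k i - lam i) + b)%R) :
  exists c1 c2 : R, (0 < c1)%R /\ (0 < c2)%R /\
  exists N : nat, forall i, N <= i ->
    (c1 * ln (INR (2 * #|X i|)) <= INR (metric_dim (incidence_rel (Bs i))))%R /\
    (INR (metric_dim (incidence_rel (Bs i))) <= c2 * ln (INR (2 * #|X i|)))%R.
Proof.
case: Hlin => a [b Hab].
have [A HA] := INR_unbounded (Rabs a + Rabs b).
have Ha := Rle_abs a; have Hb := Rle_abs b.
have Ha0 := Rabs_pos a; have Hb0 := Rabs_pos b.
have HA0 : 0 < A.
  rewrite lt0n; apply/eqP => H0; rewrite H0 /= in HA; lra.
have L2 := ln2_pos; have L4 := ln4_pos.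
have HAR : (0 < INR A)%R by apply: lt_0_INR; apply/ltP.
exists (/ ln 4)%R, (4 * INR A / ln 2)%R; split; first by apply: Rinv_0_lt_compat.
split; first by apply: Rdiv_lt_0_compat => //; lra.
exists 0 => i _.
apply: (per_design (Hdes i) (Hq i) HA0).
have Hq2 : (2 <= INR (k i - lam i))%R.
  have := le_INR _ _ (leP (Hq i)); simpl; lra.
have H := Hab i.
apply/leP; apply: INR_le; rewrite INR_muln.
set q := INR (k i - lam i) in Hq2 H *.
have H1 : (a * q <= Rabs a * q)%R by apply: Rmult_le_compat_r; lra.
have H2 : (Rabs b <= Rabs b * q)%R by nra.
have H3 : ((Rabs a + Rabs b) * q <= INR A * q)%R by apply: Rmult_le_compat_r; lra.
nra.
Qed.
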